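(* Every Weetman graph is simply connected.
   Context: All graphs are simple and connected. For a vertex $v_0$ and a vertex $v$, $d(v_0,v)$ is the graph distance, and $\mathrm{pred}_{v_0}(v)=\{u : uv\in E(G),\ d(v_0,u)=d(v_0,v)-1\}$. A graph $G$ is Weetman if for every vertex $v_0$ both of the following hold: (Triangle Condition) for every two adjacent vertices $v,v'$ with $d(v_0,v)=d(v_0,v')=k$, there is a vertex $u$ with $d(v_0,u)=k-1$ and $uv,uv'\in E(G)$; (Interval Condition) for every vertex $v$, the subgraph of $G$ induced by $\mathrm{pred}_{v_0}(v)$ is connected. A loop in $G$ is a finite sequence of vertices $(v_0,\dots,v_k)$ with, for each $i<k$, $v_iv_{i+1}\in E(G)$ or $v_i=v_{i+1}$. Two loops $(v_0,\dots,v_{i-1},v_i,v_{i+1},\dots,v_k)$ and $(v_0,\dots,v_{i-1},v_{i+1},\dots,v_k)$ are related by an elementary homotopy (in either direction) if $v_i=v_{i+1}$, or $v_{i-1}=v_{i+1}$, or $v_{i-1}v_{i+1}\in E(G)$. A loop is contractible if it can be reduced to a single vertex by a finite sequence of elementary homotopies; $G$ is simply connected if every loop is contractible. *)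

(* Defs.v *)
From Stdlib Require Import Arith List.
Import ListNotations.

Section Graphs.
Variable V : Type.
Variable adj : V -> V -> Prop.

Definition simple_graph : Prop :=
  (forall u v, adj u v -> adj v u) /\ (forall v, ~ adj v v).

Inductive walkn : nat -> V -> V -> Prop :=
| walkn_refl : forall u, walkn 0 u u
| walkn_step : forall n u w v, adj u w -> walkn n w v -> walkn (S n) u v.

Definition connected_graph : Prop := forall u v, exists n, walkn n u v.

Definition dist (u v : V) (k : nat) : Prop :=
  walkn k u v /\ forall m, walkn m u v -> k <= m.

Definition predset (v0 v u : V) : Prop :=
  adj u v /\ exists k, dist v0 u k /\ dist v0 v (S k).

Inductive walk_in (P : V -> Prop) : V -> V -> Prop :=
| walk_in_refl : forall a, P a -> walk_in P a a
| walk_in_step : forall a b c, P a -> adj a b -> walk_in P b c -> walk_in P a c.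

(* The induced subgraph on P is connected (the empty one counts as connected). *)
Definition induced_connected (P : V -> Prop) : Prop :=
  forall a b, P a -> P b -> walk_in P a b.

Definition triangle_condition (v0 : V) : Prop :=
  forall v v' k, adj v v' -> dist v0 v k -> dist v0 v' k ->
    exists u, dist v0 u (k - 1) /\ adj u v /\ adj u v'.

Definition interval_condition (v0 : V) : Prop :=
  forall v, induced_connected (predset v0 v).

Definition weetman : Prop :=
  forall v0, triangle_condition v0 /\ interval_condition v0.

Fixpoint chain (x : V) (s : list V) : Prop :=
  match s with
  | [] => True
  | y :: s' => (adj x y \/ x = y) /\ chain y s'
  end.

Definition is_loop (l : list V) : Prop :=
  exists x s, l = x :: s /\ chain x s /\ last s x = x.

Definition hdelete (l l' : list V) : Prop :=
  (exists s1 x y s2, l = s1 ++ x :: y :: s2 /\ l' = s1 ++ y :: s2 /\ x = y) \/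
  (exists s1 a x b s2, l = s1 ++ a :: x :: b :: s2 /\ l' = s1 ++ a :: b :: s2 /\
                       (a = b \/ adj a b)).

Definition elem_homotopy (l l' : list V) : Prop :=
  is_loop l /\ is_loop l' /\ (hdelete l l' \/ hdelete l' l).

Inductive homotopic : list V -> list V -> Prop :=
| homotopic_refl : forall l, homotopic l l
| homotopic_step : forall l1 l2 l3,
    elem_homotopy l1 l2 -> homotopic l2 l3 -> homotopic l1 l3.

Definition contractible (l : list V) : Prop := exists v, homotopic l [v].

Definition simply_connected : Prop :=
  forall l, is_loop l -> contractible l.

End Graphs.

(* Main.v *)
Require Import Defs.
From Stdlib Require Import Arith List Lia Classical.
Import ListNotations.

Fixpoint chainL {V : Type} (adj : V -> V -> Prop) (l : list V) : Prop :=
  match l with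
  | x :: ((y :: _) as t) => (adj x y \/ x = y) /\ chainL adj t
  | _ => True
  end.

Lemma chain_chainL {V} (adj : V -> V -> Prop) s : forall x,
  chain V adj x s <-> chainL adj (x :: s).
Proof.
  induction s as [|y s IH]; intros x; simpl; [tauto|].
  rewrite IH. destruct s; simpl; tauto.
Qed.

Lemma chainL_app {V} (adj : V -> V -> Prop) s a t :
  chainL adj (s ++ a :: t) <-> chainL adj (s ++ [a]) /\ chainL adj (a :: t).
Proof.
  induction s as [|x s IH]; simpl; [tauto|].
  destruct s as [|y s]; simpl in *; [tauto|].
  rewrite IH. tauto.
Qed.

Lemma last_app_cons {V} (p q : list V) z d :
  last (p ++ z :: q) d = last (z :: q) d.
Proof.
  induction p as [|x p IH]; simpl; [reflexivity|].
  rewrite IH. destruct p; simpl; destruct q; reflexivity.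
Qed.

Lemma last_cons_def {V} (x : V) s : last (x :: s) x = last s x.
Proof.
  destruct s as [|y s]; [reflexivity|].
  simpl. revert y. induction s as [|z s IH]; intros y; [reflexivity|].
  simpl. apply IH.
Qed.

Lemma is_loop_iff {V} (adj : V -> V -> Prop) l :
  is_loop V adj l <-> exists x, hd_error l = Some x /\ chainL adj l /\ last l x = x.
Proof.
  split.
  - intros [x [s [-> [Hc Hl]]]]. exists x. rewrite <- chain_chainL, last_cons_def. auto.
  - intros [x [Hh [Hc Hl]]]. destruct l as [|y s]; [discriminate|].
    simpl in Hh. injection Hh as ->. exists x, s. rewrite chain_chainL, <- last_cons_def. auto.
Qed.

Lemma loop_replace {V} (adj : V -> V -> Prop) s1 s2 h z mid mid' :
  is_loop V adj (s1 ++ h :: mid ++ z :: s2) ->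
  chainL adj (h :: mid' ++ [z]) ->
  is_loop V adj (s1 ++ h :: mid' ++ z :: s2).
Proof.
  rewrite !is_loop_iff. intros [x [Hh [Hc Hl]]] Hm. exists x. split; [|split].
  - destruct s1; exact Hh.
  - apply chainL_app in Hc. destruct Hc as [Hc1 Hc2].
    apply chainL_app. split; [exact Hc1|].
    change (h :: mid' ++ z :: s2) with ((h :: mid') ++ z :: s2).
    change (h :: mid ++ z :: s2) with ((h :: mid) ++ z :: s2) in Hc2.
    apply chainL_app in Hc2. apply chainL_app. tauto.
  - rewrite app_comm_cons, app_assoc, last_app_cons.
    rewrite app_comm_cons, app_assoc, last_app_cons in Hl. exact Hl.
Qed.

Definition Rel {V} (adj : V -> V -> Prop) x y := adj x y \/ x = y.

Lemma M1 {V} (adj : V -> V -> Prop) s1 s2 a x b :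
  is_loop V adj (s1 ++ a :: x :: b :: s2) -> Rel adj a b ->
  elem_homotopy V adj (s1 ++ a :: x :: b :: s2) (s1 ++ a :: b :: s2).
Proof.
  intros Hl Hr. split; [exact Hl|split].
  - exact (loop_replace adj s1 s2 a b [x] [] Hl (conj Hr I)).
  - left. right. exists s1, a, x, b, s2. split; [reflexivity|split; [reflexivity|]].
    unfold Rel in Hr; tauto.
Qed.

Lemma M2 {V} (adj : V -> V -> Prop) s1 s2 a x b :
  is_loop V adj (s1 ++ a :: b :: s2) -> Rel adj a x -> Rel adj x b -> Rel adj a b ->
  elem_homotopy V adj (s1 ++ a :: b :: s2) (s1 ++ a :: x :: b :: s2).
Proof.
  intros Hl H1 H2 Hr. split; [exact Hl|split].
  - exact (loop_replace adj s1 s2 a b [] [x] Hl (conj H1 (conj H2 I))).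
  - right. right. exists s1, a, x, b, s2. split; [reflexivity|split; [reflexivity|]].
    unfold Rel in Hr; tauto.
Qed.

Lemma M3 {V} (adj : V -> V -> Prop) x s :
  is_loop V adj (x :: x :: s) -> elem_homotopy V adj (x :: x :: s) (x :: s).
Proof.
  intros Hl. split; [exact Hl|split].
  - rewrite is_loop_iff in *. destruct Hl as [y [Hh [Hc Hl]]].
    simpl in Hh. injection Hh as <-. exists x. split; [reflexivity|split].
    + exact (proj2 Hc).
    + rewrite last_cons_def in Hl. simpl in Hl. exact Hl.
  - left. left. exists [], x, x, s. auto.
Qed.

Lemma homotopic_trans {V} (adj : V -> V -> Prop) l1 l2 l3 :
  homotopic V adj l1 l2 -> homotopic V adj l2 l3 -> homotopic V adj l1 l3.
Proof.
  induction 1; intros; [assumption|]. eapply homotopic_step; eauto.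
Qed.

Lemma homotopic_loop {V} (adj : V -> V -> Prop) l1 l2 :
  homotopic V adj l1 l2 -> is_loop V adj l1 -> is_loop V adj l2.
Proof.
  induction 1; intros; [assumption|]. apply IHhomotopic. apply H.
Qed.

Lemma hom1 {V} (adj : V -> V -> Prop) l1 l2 :
  elem_homotopy V adj l1 l2 -> homotopic V adj l1 l2.
Proof. intros H. eapply homotopic_step; [exact H|constructor]. Qed.

Lemma walkn_snoc {V} (adj : V -> V -> Prop) n u w v :
  walkn V adj n u w -> adj w v -> walkn V adj (S n) u v.
Proof.
  induction 1; intros.
  - econstructor; [eassumption|constructor].
  - econstructor; [eassumption|auto].
Qed.

Lemma min_exists (P : nat -> Prop) :
  (exists n, P n) -> exists n, P n /\ forall m, P m -> n <= m.
Proof.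
  intros [n Hn]. apply NNPP. intros Hno.
  assert (forall k m, m <= k -> ~ P m).
  { induction k; intros m Hm Pm.
    - apply Hno. exists m. split; [exact Pm|]. intros; lia.
    - apply Hno. exists m. split; [exact Pm|]. intros m' Pm'.
      destruct (le_lt_dec m m'); [assumption|].
      exfalso. apply (IHk m'); [lia|exact Pm']. }
  exact (H n n (le_n n) Hn).
Qed.

Lemma dist_exists {V} (adj : V -> V -> Prop) :
  connected_graph V adj -> forall u v, exists k, dist V adj u v k.
Proof.
  intros Hc u v. destruct (min_exists (fun n => walkn V adj n u v) (Hc u v)) as [k Hk].
  exists k. exact Hk.
Qed.

Lemma dist_unique {V} (adj : V -> V -> Prop) u v k k' :
  dist V adj u v k -> dist V adj u v k' -> k = k'.
Proof.
  intros [H1 H2] [H3 H4]. specialize (H2 _ H3). specialize (H4 _ H1). lia.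
Qed.

Lemma dist_refl {V} (adj : V -> V -> Prop) v : dist V adj v v 0.
Proof. split; [constructor|intros; lia]. Qed.

Lemma dist_adj {V} (adj : V -> V -> Prop) v0 a v ka kv :
  adj a v -> dist V adj v0 a ka -> dist V adj v0 v kv -> kv <= S ka.
Proof.
  intros Ha [H1 _] [_ H2]. apply H2. eapply walkn_snoc; eauto.
Qed.

Definition leK {V} (adj : V -> V -> Prop) v0 K x := exists d, dist V adj v0 x d /\ d <= K.

Lemma walk_in_left {V} (adj : V -> V -> Prop) P a b : walk_in V adj P a b -> P a.
Proof. destruct 1; assumption. Qed.

Lemma interval_hom {V} (adj : V -> V -> Prop) P a b :
  walk_in V adj P a b -> forall s1 s2 v, (forall p, P p -> adj p v) ->
  is_loop V adj (s1 ++ a :: v :: b :: s2) ->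
  exists t, Forall P t /\
    homotopic V adj (s1 ++ a :: v :: b :: s2) (s1 ++ a :: t ++ b :: s2).
Proof.
  induction 1 as [a Pa|a c b Pa Hac Hw IH]; intros s1 s2 v HP Hl.
  - exists []. split; [constructor|]. apply hom1. apply M1; [exact Hl|right; reflexivity].
  - assert (Pc : P c) by (eapply walk_in_left; eauto).
    assert (E := M2 adj s1 (b :: s2) a c v Hl (or_introl Hac) (or_introl (HP c Pc))
      (or_introl (HP a Pa))).
    assert (Hl2 := proj1 (proj2 E)).
    replace (s1 ++ a :: c :: v :: b :: s2) with ((s1 ++ [a]) ++ c :: v :: b :: s2) in E, Hl2
      by (rewrite <- app_assoc; reflexivity).
    destruct (IH (s1 ++ [a]) s2 v HP Hl2) as [t [Ht Hh]].
    exists (c :: t). split; [constructor; assumption|].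
    eapply homotopic_step; [exact E|].
    replace (s1 ++ a :: (c :: t) ++ b :: s2) with ((s1 ++ [a]) ++ c :: t ++ b :: s2)
      by (rewrite <- app_assoc; reflexivity).
    exact Hh.
Qed.

Lemma step_lemma {V} (adj : V -> V -> Prop) v0 K s1 s2 a v b :
  simple_graph V adj -> triangle_condition V adj v0 -> interval_condition V adj v0 ->
  1 <= K ->
  is_loop V adj (s1 ++ a :: v :: b :: s2) -> dist V adj v0 v K ->
  leK adj v0 (K - 1) a -> leK adj v0 K b ->
  exists t, Forall (leK adj v0 (K - 1)) t /\
    homotopic V adj (s1 ++ a :: v :: b :: s2) (s1 ++ a :: t ++ b :: s2).
Proof.
  intros [Hsym Hirr] Htri Hint HK Hl Hv [da [Hda Hda']] [db [Hdb Hdb']].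
  assert (Hch : Rel adj a v /\ Rel adj v b).
  { apply is_loop_iff in Hl. destruct Hl as [_ [_ [Hc _]]].
    apply chainL_app in Hc. destruct Hc as [_ Hc]. simpl in Hc. unfold Rel. tauto. }
  destruct Hch as [Hav Hvb].
  assert (Hav' : adj a v).
  { destruct Hav as [H|<-]; [exact H|].
    pose proof (dist_unique adj _ _ _ _ Hda Hv). lia. }
  pose proof (dist_adj adj _ _ _ _ _ Hav' Hda Hv) as Hda2.
  assert (HPa : predset V adj v0 v a).
  { split; [exact Hav'|]. exists da. split; [exact Hda|].
    replace (S da) with K by lia. exact Hv. }
  assert (HPle : forall p, predset V adj v0 v p -> leK adj v0 (K - 1) p).
  { intros p [_ [k [Hk1 Hk2]]]. pose proof (dist_unique adj _ _ _ _ Hk2 Hv).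
    exists k. split; [exact Hk1|lia]. }
  assert (HPadj : forall p, predset V adj v0 v p -> adj p v) by (intros p [H _]; exact H).
  destruct Hvb as [Hvb|<-].
  2:{ exists []. split; [constructor|]. apply hom1. apply M1; [exact Hl|exact Hav]. }
  pose proof (dist_adj adj _ _ _ _ _ (Hsym _ _ Hvb) Hdb Hv) as Hdb2.
  destruct (Nat.eq_dec db K) as [Heq|Hne].
  - subst db. destruct (Htri v b K Hvb Hv Hdb) as [u [Hu [Huv Hub]]].
    assert (HPu : predset V adj v0 v u).
    { split; [exact Huv|]. exists (K - 1). split; [exact Hu|].
      replace (S (K - 1)) with K by lia. exact Hv. }
    assert (E := M2 adj (s1 ++ [a]) s2 v u b).
    replace ((s1 ++ [a]) ++ v :: b :: s2) with (s1 ++ a :: v :: b :: s2) in E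
      by (rewrite <- app_assoc; reflexivity).
    specialize (E Hl (or_introl (Hsym _ _ Huv)) (or_introl Hub) (or_introl Hvb)).
    replace ((s1 ++ [a]) ++ v :: u :: b :: s2) with (s1 ++ a :: v :: u :: b :: s2) in E
      by (rewrite <- app_assoc; reflexivity).
    assert (Hl2 := proj1 (proj2 E)).
    destruct (interval_hom adj _ a u (Hint v a u HPa HPu) s1 (b :: s2) v HPadj Hl2)
      as [t [Ht Hh]].
    exists (t ++ [u]). split.
    + apply Forall_app. split; [eapply Forall_impl; [exact HPle|exact Ht]|].
      constructor; [apply HPle; exact HPu|constructor].
    + eapply homotopic_step; [exact E|].
      replace (s1 ++ a :: (t ++ [u]) ++ b :: s2) with (s1 ++ a :: t ++ u :: b :: s2)
        by (rewrite <- app_assoc; reflexivity).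
      exact Hh.
  - assert (HPb : predset V adj v0 v b).
    { split; [exact (Hsym _ _ Hvb)|]. exists db. split; [exact Hdb|].
      replace (S db) with K by lia. exact Hv. }
    destruct (interval_hom adj _ a b (Hint v a b HPa HPb) s1 s2 v HPadj Hl)
      as [t [Ht Hh]].
    exists t. split; [eapply Forall_impl; [exact HPle|exact Ht]|exact Hh].
Qed.

Lemma process {V} (adj : V -> V -> Prop) v0 K :
  simple_graph V adj -> triangle_condition V adj v0 -> interval_condition V adj v0 ->
  1 <= K ->
  forall q p', is_loop V adj (v0 :: p' ++ q) -> Forall (leK adj v0 (K - 1)) (v0 :: p') ->
  Forall (leK adj v0 K) q ->
  exists s', Forall (leK adj v0 (K - 1)) (v0 :: s') /\
    homotopic V adj (v0 :: p' ++ q) (v0 :: s') /\ is_loop V adj (v0 :: s').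
Proof.
  intros Hs Ht Hi HK q. induction q as [|v q IH]; intros p' Hl Hp Hq.
  - exists p'. rewrite app_nil_r in *. split; [exact Hp|split; [constructor|exact Hl]].
  - inversion Hq as [|? ? HvK Hq']; subst.
    destruct (classic (leK adj v0 (K - 1) v)) as [Hv|Hv].
    + destruct (IH (p' ++ [v])) as [s' Hs'].
      * rewrite <- app_assoc. exact Hl.
      * change (Forall (leK adj v0 (K - 1)) ((v0 :: p') ++ [v])).
        apply Forall_app. split; [exact Hp|constructor; [exact Hv|constructor]].
      * exact Hq'.
      * rewrite <- app_assoc in Hs'. exists s'. exact Hs'.
    + destruct HvK as [dv [Hdv Hdv']].
      assert (dv = K) by (destruct (Nat.eq_dec dv K); [assumption|exfalso; apply Hv; exists dv; split; [exact Hdv|lia]]).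
      subst dv.
      destruct q as [|b q''].
      * exfalso. apply Hv. apply is_loop_iff in Hl. destruct Hl as [x [Hh [_ Hlast]]].
        simpl in Hh. injection Hh as <-.
        rewrite app_comm_cons, last_app_cons in Hlast. simpl in Hlast. subst v.
        exists 0. split; [apply dist_refl|lia].
      * destruct (exists_last (l := v0 :: p') ltac:(discriminate)) as [p0 [a Heq]].
        assert (Ha : leK adj v0 (K - 1) a).
        { rewrite Heq in Hp. apply Forall_app in Hp. destruct Hp as [_ Hp].
          inversion Hp; assumption. }
        assert (Hb : leK adj v0 K b) by (inversion Hq'; assumption).
        assert (Hl' : is_loop V adj (p0 ++ a :: v :: b :: q'')).
        { replace (p0 ++ a :: v :: b :: q'') with ((p0 ++ [a]) ++ v :: b :: q'')
            by (rewrite <- app_assoc; reflexivity).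
          rewrite <- Heq. exact Hl. }
        destruct (step_lemma adj v0 K p0 q'' a v b Hs Ht Hi HK Hl' Hdv Ha Hb) as [t [Ht' Hh]].
        assert (Eq1 : p0 ++ a :: t ++ b :: q'' = v0 :: (p' ++ t) ++ b :: q'').
        { rewrite <- app_assoc. change (v0 :: p' ++ t ++ b :: q'') with ((v0 :: p') ++ t ++ b :: q'').
          rewrite Heq, <- app_assoc. reflexivity. }
        assert (Eq2 : p0 ++ a :: v :: b :: q'' = v0 :: p' ++ v :: b :: q'').
        { change (v0 :: p' ++ v :: b :: q'') with ((v0 :: p') ++ v :: b :: q'').
          rewrite Heq, <- app_assoc. reflexivity. }
        rewrite Eq1, Eq2 in Hh.
        destruct (IH (p' ++ t)) as [s' [Hs1 [Hs2 Hs3]]].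
        -- eapply homotopic_loop; [exact Hh|exact Hl].
        -- change (Forall (leK adj v0 (K - 1)) ((v0 :: p') ++ t)).
           apply Forall_app. split; assumption.
        -- exact Hq'.
        -- exists s'. split; [exact Hs1|split; [|exact Hs3]].
           eapply homotopic_trans; [exact Hh|exact Hs2].
Qed.

Lemma collapse {V} (adj : V -> V -> Prop) v0 s :
  Forall (eq v0) s -> is_loop V adj (v0 :: s) -> homotopic V adj (v0 :: s) [v0].
Proof.
  induction s as [|x s IH]; intros Hf Hl; [constructor|].
  inversion Hf; subst.
  pose proof (M3 adj x s Hl) as E.
  eapply homotopic_step; [exact E|]. apply IH; [assumption|apply E].
Qed.

Lemma leK_mono {V} (adj : V -> V -> Prop) v0 K K' x :
  leK adj v0 K x -> K <= K' -> leK adj v0 K' x.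
Proof. intros [d [H1 H2]] H. exists d. split; [exact H1|lia]. Qed.

Lemma outer {V} (adj : V -> V -> Prop) v0 :
  simple_graph V adj -> triangle_condition V adj v0 -> interval_condition V adj v0 ->
  forall K s, is_loop V adj (v0 :: s) -> Forall (leK adj v0 K) (v0 :: s) ->
  homotopic V adj (v0 :: s) [v0].
Proof.
  intros Hs Ht Hi K. induction K as [|K IH]; intros s Hl Hf.
  - apply collapse; [|exact Hl]. inversion Hf; subst.
    eapply Forall_impl; [|eassumption]. intros x [d [Hd Hd0]].
    assert (d = 0) by lia. subst d. destruct Hd as [Hw _]. inversion Hw; reflexivity.
  - inversion Hf; subst.
    destruct (process adj v0 (S K) Hs Ht Hi ltac:(lia) s [] Hl) as [s' [G1 [G2 G3]]].
    + constructor; [|constructor]. exists 0. split; [apply dist_refl|lia].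
    + assumption.
    + replace (S K - 1) with K in G1 by lia.
      eapply homotopic_trans; [exact G2|]. apply IH; assumption.
Qed.

Lemma bound_exists {V} (adj : V -> V -> Prop) v0 :
  connected_graph V adj -> forall l, exists K, Forall (leK adj v0 K) l.
Proof.
  intros Hc l. induction l as [|x l [K HK]].
  - exists 0. constructor.
  - destruct (dist_exists adj Hc v0 x) as [d Hd]. exists (Nat.max d K). constructor.
    + exists d. split; [exact Hd|lia].
    + eapply Forall_impl; [|exact HK]. intros y Hy. eapply leK_mono; [exact Hy|lia].
Qed.

Theorem mainTheorem2 (V : Type) (adj : V -> V -> Prop)
  (Hsimple : simple_graph V adj) (Hconn : connected_graph V adj)
  (Hweet : weetman V adj) :
  simply_connected V adj.
Proof.
  intros l Hl. pose proof Hl as Hl0. destruct Hl0 as [x [s [-> _]]].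
  destruct (Hweet x) as [Ht Hi].
  destruct (bound_exists adj x Hconn (x :: s)) as [K HK].
  exists x. eapply outer; eauto.
Qed.
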